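(* Let $G$ be a finite group, $\varphi\colon T\to S$ a morphism of $G$-Tambara functors, and $J$ a radical Tambara ideal of $S$. Then the levelwise preimage $\varphi^{-1}(J)$, defined by $\varphi^{-1}(J)(G/H)=\varphi_H^{-1}(J(G/H))$, is a radical Tambara ideal of $T$.
   Context: All rings are commutative with unit. A $G$-Tambara functor $T$ consists of commutative rings $T(G/H)$ for subgroups $H\le G$ with restriction ring maps, additive transfer maps, multiplicative norm maps and conjugation isomorphisms satisfying the standard Tambara axioms (Hill–Mazur). A morphism $\varphi\colon T\to S$ is a family of ring homomorphisms $\varphi_H\colon T(G/H)\to S(G/H)$ commuting with all restrictions, transfers, norms and conjugations. A Tambara ideal is a family of ring ideals $I(G/H)\subseteq T(G/H)$ closed under restriction, transfer, norm and conjugation. $\langle x\rangle$ is the Tambara ideal generated by $x$; products of Tambara ideals are generated by levelwise products. The radical $\sqrt I$ has $\sqrt I(G/H)=\{x\mid \langle x\rangle^n\subseteq I\text{ for some }n\ge1\}$; $I$ is radical if $I=\sqrt I$. *)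

(* Defs.v *)
(* G-Tambara functors for a finite group G, indexed by the
   subgroups H of G (G is a subgroup of a finGroupType gT). *)
From HB Require Import structures.
From mathcomp Require Import all_boot all_order all_algebra all_fingroup.

Set Implicit Arguments.
Unset Strict Implicit.
Unset Printing Implicit Defensive.

Import GRing.Theory.
Local Open Scope ring_scope.

Section Tambara.

Variable gT : finGroupType.

Definition cjG (K : {group gT}) (g : gT) : {group gT} := (K :^ g)%G.
Definition capG (A B : {group gT}) : {group gT} := (A :&: B)%G.
Definition genG (A : {set gT}) : {group gT} := (<<A>>)%G.

Definition dc_transversal (H L K R : {set gT}) : Prop :=
  R \subset H /\
  forall h, h \in H -> exists! g, g \in R /\ h \in ((L :* g) * K)%g.

Definition act_sets (h : gT) (U : {set {set gT}}) : {set {set gT}} :=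
  [set (h *: C)%g | C in U].

Definition stabS (H : {set gT}) (U : {set {set gT}}) : {group gT} :=
  genG [set h in H | act_sets h U == U].

Definition subsets_transversal (H K : {set gT}) (RU : {set {set {set gT}}}) :=
  (forall U, U \in RU -> U \subset lcosets K H) /\
  forall U', U' \subset lcosets K H ->
    exists! U, U \in RU /\ exists2 h, h \in H & U' = act_sets h U.

Definition orbit_reps (M K : {set gT}) (U : {set {set gT}}) (Q : {set gT}) :=
  (forall q, q \in Q -> (q *: K)%g \in U) /\
  forall C, C \in U -> exists! q, q \in Q /\ C \subset ((M :* q) * K)%g.

(* sections s : H/K -> H/L of the projection H/L -> H/K (L <= K <= H),
   extended by the empty set outside H/K *)
Definition is_section (H K L : {set gT}) (s : {ffun {set gT} -> {set gT}}) :=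
  forall C, if C \in lcosets K H then s C \in lcosets L H /\ s C \subset C
            else s C = set0.

Definition act_sec (h : gT) (s : {ffun {set gT} -> {set gT}}) :
  {ffun {set gT} -> {set gT}} := [ffun C => (h *: s (h^-1 *: C))%g].

Definition stabF (H : {set gT}) (s : {ffun {set gT} -> {set gT}}) : {group gT} :=
  genG [set h in H | act_sec h s == s].

Definition sections_transversal (H K L : {set gT})
    (RS : {set {ffun {set gT} -> {set gT}}}) :=
  (forall s, s \in RS -> is_section H K L s) /\
  forall s', is_section H K L s' ->
    exists! s, s \in RS /\ exists2 h, h \in H & s' = act_sec h s.

Definition section_reps (H M K L : {set gT}) (s : {ffun {set gT} -> {set gT}})
    (Q : {set gT}) :=
  (forall q, q \in Q -> s (q *: K)%g = (q *: L)%g) /\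
  forall C, C \in lcosets K H -> exists! q, q \in Q /\ C \subset ((M :* q) * K)%g.

Definition addhom (R S : comPzRingType) (f : R -> S) :=
  forall x y, f (x + y) = f x + f y.
Definition rhom (R S : comPzRingType) (f : R -> S) :=
  addhom f /\ (forall x y, f (x * y) = f x * f y) /\ f 1 = 1.

(* ---------- Tambara data ----------
   tres H K : T(G/H) -> T(G/K)    restriction  (K <= H)
   ttr  H K : T(G/K) -> T(G/H)    transfer     (K <= H)
   tnm  H K : T(G/K) -> T(G/H)    norm         (K <= H)
   tcj g H K : T(G/H) -> T(G/K)   conjugation  (K = H :^ g = g^-1 H g)
   The maps are total; the axioms only constrain them on valid indices. *)
Record tambara_data := TambaraData {
  tR : {group gT} -> comPzRingType;
  tres : forall H K : {group gT}, tR H -> tR K;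
  ttr : forall H K : {group gT}, tR K -> tR H;
  tnm : forall H K : {group gT}, tR K -> tR H;
  tcj : gT -> forall H K : {group gT}, tR H -> tR K
}.
Arguments tres : clear implicits.
Arguments ttr : clear implicits.
Arguments tnm : clear implicits.
Arguments tcj : clear implicits.

Section TamLaws.
Variables (G : {group gT}) (T : tambara_data).

Local Notation res := (tres T).
Local Notation tr := (ttr T).
Local Notation nm := (tnm T).
Local Notation cj := (tcj T).

(* the factor N^M_{M ∩ qKq^-1} res c_q a, with a : T(G/A), qAq^-1 ⊇ M ∩ qKq^-1 *)
Definition nfac (M K A : {group gT}) (q : gT) (a : tR T A) : tR T M :=
  nm M (capG M (cjG K q^-1%g))
     (res (cjG A q^-1%g) (capG M (cjG K q^-1%g)) (cj q^-1%g A (cjG A q^-1%g) a)).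
Arguments nfac : clear implicits.

Definition tambara_axioms : Prop :=
  (forall H K : {group gT}, H \subset G -> K \subset H -> rhom (res H K)) /\
  (forall H K : {group gT}, H \subset G -> K \subset H -> addhom (tr H K)) /\
  (forall H K : {group gT}, H \subset G -> K \subset H ->
     (forall x y, nm H K (x * y) = nm H K x * nm H K y) /\
     nm H K 1 = 1 /\ nm H K 0 = 0) /\
  (forall g (H K : {group gT}), g \in G -> H \subset G -> gval K = (H :^ g)%g ->
     rhom (cj g H K)) /\
  (forall H : {group gT}, H \subset G -> forall x : tR T H,
     res H H x = x /\ tr H H x = x /\ nm H H x = x) /\
  (forall H K L : {group gT}, H \subset G -> K \subset H -> L \subset K ->
     (forall x, res K L (res H K x) = res H L x) /\
     (forall y, tr H K (tr K L y) = tr H L y) /\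
     (forall y, nm H K (nm K L y) = nm H L y)) /\
  (forall h (H : {group gT}) x, H \subset G -> h \in H -> cj h H H x = x) /\
  (forall g h (H K L : {group gT}) x, g \in G -> h \in G -> H \subset G ->
     gval K = (H :^ h)%g -> gval L = (K :^ g)%g ->
     cj g K L (cj h H K x) = cj (h * g)%g H L x) /\
  (forall g (H K H' K' : {group gT}), g \in G -> H \subset G -> K \subset H ->
     gval H' = (H :^ g)%g -> gval K' = (K :^ g)%g ->
     (forall x, cj g K K' (res H K x) = res H' K' (cj g H H' x)) /\
     (forall y, cj g H H' (tr H K y) = tr H' K' (cj g K K' y)) /\
     (forall y, cj g H H' (nm H K y) = nm H' K' (cj g K K' y))) /\
  (forall H K : {group gT}, H \subset G -> K \subset H -> forall x y,
     tr H K x * y = tr H K (x * res H K y)) /\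
  (forall (H K L : {group gT}) (R : {set gT}), H \subset G -> K \subset H ->
     L \subset H -> dc_transversal H L K R ->
     (forall x, res H L (tr H K x) =
       \sum_(g in R) tr L (capG L (cjG K g^-1%g))
          (cj g^-1%g (capG K (cjG L g)) (capG L (cjG K g^-1%g))
             (res K (capG K (cjG L g)) x))) /\
     (forall x, res H L (nm H K x) =
       \prod_(g in R) nm L (capG L (cjG K g^-1%g))
          (cj g^-1%g (capG K (cjG L g)) (capG L (cjG K g^-1%g))
             (res K (capG K (cjG L g)) x)))) /\
  (forall (H K : {group gT}) RU (Qa Qb : {set {set gT}} -> {set gT}),
     H \subset G -> K \subset H -> subsets_transversal H K RU ->
     (forall U, U \in RU -> orbit_reps (stabS H U) K U (Qa U) /\
                           orbit_reps (stabS H U) K (lcosets K H :\: U) (Qb U)) ->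
     forall a b : tR T K,
     nm H K (a + b) =
       \sum_(U in RU) tr H (stabS H U)
          ((\prod_(q in Qa U) nfac (stabS H U) K K q a) *
           (\prod_(q in Qb U) nfac (stabS H U) K K q b))) /\
  (forall (H K L : {group gT}) RS (Q : {ffun {set gT} -> {set gT}} -> {set gT}),
     H \subset G -> K \subset H -> L \subset K -> sections_transversal H K L RS ->
     (forall s, s \in RS -> section_reps H (stabF H s) K L s (Q s)) ->
     forall a : tR T L,
     nm H K (tr K L a) =
       \sum_(s in RS) tr H (stabF H s)
          (\prod_(q in Q s) nfac (stabF H s) K L q a)).

End TamLaws.

Record tambara (G : {group gT}) := Tambara {
  tdata :> tambara_data;
  taxioms : tambara_axioms G tdata
}.

Definition tmorphism (G : {group gT}) (T S : tambara_data)
    (phi : forall H : {group gT}, tR T H -> tR S H) : Prop :=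
  (forall H : {group gT}, H \subset G -> rhom (phi H)) /\
  (forall H K : {group gT}, H \subset G -> K \subset H -> forall x,
     phi K (@tres T H K x) = @tres S H K (phi H x)) /\
  (forall H K : {group gT}, H \subset G -> K \subset H -> forall x,
     phi H (@ttr T H K x) = @ttr S H K (phi K x)) /\
  (forall H K : {group gT}, H \subset G -> K \subset H -> forall x,
     phi H (@tnm T H K x) = @tnm S H K (phi K x)) /\
  (forall g (H K : {group gT}), g \in G -> H \subset G -> gval K = (H :^ g)%g ->
     forall x, phi K (@tcj T g H K x) = @tcj S g H K (phi H x)).

Definition tfamily (T : tambara_data) := forall H : {group gT}, tR T H -> Prop.

Definition tideal (G : {group gT}) (T : tambara_data) (I : tfamily T) : Prop :=
  (forall H : {group gT}, H \subset G -> I H 0) /\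
  (forall (H : {group gT}) x y, H \subset G -> I H x -> I H y -> I H (x + y)) /\
  (forall (H : {group gT}) r x, H \subset G -> I H x -> I H (r * x)) /\
  (forall H K : {group gT}, H \subset G -> K \subset H -> forall x,
     I H x -> I K (@tres T H K x)) /\
  (forall H K : {group gT}, H \subset G -> K \subset H -> forall x,
     I K x -> I H (@ttr T H K x)) /\
  (forall H K : {group gT}, H \subset G -> K \subset H -> forall x,
     I K x -> I H (@tnm T H K x)) /\
  (forall g (H K : {group gT}), g \in G -> H \subset G -> gval K = (H :^ g)%g ->
     forall x, I H x -> I K (@tcj T g H K x)).

Definition tsubfam (G : {group gT}) (T : tambara_data) (A B : tfamily T) :=
  forall H : {group gT}, H \subset G -> forall x, A H x -> B H x.

Definition tgen (G : {group gT}) (T : tambara_data) (H0 : {group gT})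
    (x : tR T H0) : tfamily T :=
  fun H y => forall I : tfamily T, tideal G I -> I H0 x -> I H y.

Definition tprod (G : {group gT}) (T : tambara_data) (A B : tfamily T) : tfamily T :=
  fun H y => forall I : tfamily T, tideal G I ->
    (forall (H' : {group gT}) a b, H' \subset G -> A H' a -> B H' b -> I H' (a * b)) ->
    I H y.

(* tpow A n = A^(n+1) *)
Definition tpow (G : {group gT}) (T : tambara_data) (A : tfamily T) (n : nat) :
  tfamily T := iter n (fun P => tprod G P A) A.

(* radical: x with <x>^m ⊆ I for some m >= 1 (m = n+1) *)
Definition tsqrt (G : {group gT}) (T : tambara_data) (I : tfamily T) : tfamily T :=
  fun H x => exists n : nat, @tsubfam G T (@tpow G T (@tgen G T H x) n) I.

Definition tradical (G : {group gT}) (T : tambara_data) (I : tfamily T) : Prop :=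
  forall H : {group gT}, H \subset G -> forall x, I H x <-> @tsqrt G T I H x.

Definition tpreim (T S : tambara_data) (phi : forall H : {group gT}, tR T H -> tR S H)
    (J : tfamily S) : tfamily T :=
  fun H x => J H (phi H x).

End Tambara.

(* Main.v *)
Require Import Defs.
From mathcomp Require Import all_boot all_order all_algebra all_fingroup.
From Stdlib Require Import FunctionalExtensionality.

Set Implicit Arguments. Unset Strict Implicit. Unset Printing Implicit Defensive.

Section GroupPart.
Variable gT : finGroupType.
Implicit Types M K H L : {group gT}.
Local Open Scope group_scope.

Lemma dcP M K x z : reflect (exists m, exists k, [/\ m \in M, k \in K & z = m * x * k]) (z \in (M :* x) * K).
Proof.
apply: (iffP mulsgP).
- case=> y k /rcosetP [m Hm ->] Hk ->. by exists m, k.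
- case=> m [k [Hm Hk ->]]. exists (m * x) k => //. by apply/rcosetP; exists m.
Qed.

Lemma dc_self M K x : x \in (M :* x) * K.
Proof. apply/dcP; exists 1, 1; by rewrite !group1 mul1g mulg1. Qed.

Lemma dc_eq M K x y : y \in (M :* x) * K -> (M :* y) * K = (M :* x) * K.
Proof.
case/dcP=> m [k [Hm Hk ->]]. apply/setP=> z; apply/dcP/dcP.
- case=> m' [k' [Hm' Hk' ->]]. exists (m' * m), (k * k'). split; try by rewrite groupM.
  by rewrite !mulgA.
- case=> m' [k' [Hm' Hk' ->]]. exists (m' * m^-1), (k^-1 * k'). split; try by rewrite groupM ?groupV.
  by rewrite !mulgA mulgKV mulgK.
Qed.

Lemma dc_inter M K x y z : z \in (M :* x) * K -> z \in (M :* y) * K -> (M :* x) * K = (M :* y) * K.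
Proof. by move=> /dc_eq <- /dc_eq <-. Qed.

Lemma dc_mulr M K x y k : y \in (M :* x) * K -> k \in K -> y * k \in (M :* x) * K.
Proof.
case/dcP=> m [k0 [Hm Hk ->]] Hk'. apply/dcP; exists m, (k0 * k). by rewrite groupM // !mulgA.
Qed.

Lemma coset_repr K x : repr (x *: K) \in x *: K /\ repr (x *: K) *: K = x *: K.
Proof.
have Hx : x \in x *: K by apply/lcosetP; exists 1; rewrite ?group1 ?mulg1.
have Hr := mem_repr _ Hx. split => //. exact/lcoset_eqP.
Qed.

Lemma coset_dc M K x : x *: K \subset (M :* repr (x *: K)) * K.
Proof.
have [Hr E] := coset_repr K x. rewrite -{1}E. apply/subsetP=> z /lcosetP [k Hk ->].
apply: dc_mulr => //; exact: dc_self.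
Qed.

Lemma lcosets_mem H K x : K \subset H -> x *: K \in lcosets K H -> x \in H.
Proof.
move=> sKH /lcosetsP [h Hh E].
have : x \in h *: K by rewrite -E; apply/lcosetP; exists 1; rewrite ?group1 ?mulg1.
case/lcosetP=> k Hk ->. by rewrite groupM // (subsetP sKH).
Qed.

Lemma orbit_trans (X : finType) (f : gT -> X -> X) H (P : pred X) :
  (forall x, f 1 x = x) -> (forall a b x, a \in H -> b \in H -> f (a*b) x = f a (f b x)) ->
  (forall h x, h \in H -> P x -> P (f h x)) ->
  exists R : {set X}, (forall x, x \in R -> P x) /\
    forall x', P x' -> exists! x, x \in R /\ exists2 h, h \in H & x' = f h x.
Proof.
move=> f1 fM fP.
pose orb x := [set f h x | h in H].
have orb_self x : x \in orb x by apply/imsetP; exists 1 => //; rewrite f1.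
have orb_eq x y : y \in orb x -> orb y = orb x.
  case/imsetP=> h Hh ->; apply/setP=> z; apply/imsetP/imsetP.
  - case=> k Hk ->; exists (k*h); [by rewrite groupM | by rewrite fM].
  - case=> k Hk ->; exists (k*h^-1); first by rewrite groupM ?groupV.
    by rewrite -fM ?groupM ?groupV // -mulgA mulVg mulg1.
pose rep x := odflt x [pick y in orb x].
have rep_in x : rep x \in orb x.
  rewrite /rep; case: pickP => //= /(_ x); by rewrite orb_self.
have rep_eq x y : orb x = orb y -> rep x = rep y.
  rewrite /rep => E; rewrite E; case: pickP => //= /(_ y); by rewrite orb_self.
exists [set rep x | x in P]; split.
- move=> x /imsetP [y Py ->]. have := rep_in y; case/imsetP => h Hh ->. by apply: fP.
- move=> x' Px'. exists (rep x'); split.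
    split; first by apply/imsetP; exists x'.
    have:= rep_in x'; case/imsetP=> h Hh E. exists h^-1; first by rewrite groupV.
    by rewrite E -fM ?groupV // mulVg f1.
  move=> x [/imsetP [y Py ->] [h Hh E]].
  apply: rep_eq. have Hx : x' \in orb (rep y) by rewrite E; apply/imsetP; exists h.
  rewrite (orb_eq _ _ Hx). exact: orb_eq (rep_in y).
Qed.

Definition qsel (U : {set {set gT}}) (D : {set gT}) : gT :=
  repr (odflt set0 [pick C in U | C \subset D]).
Definition oreps M K (U : {set {set gT}}) := [set qsel U ((M :* repr C) * K) | C in U].

Lemma orepsP M K (U : {set {set gT}}) : (forall C, C \in U -> exists x, C = x *: K) ->
  orbit_reps M K U (oreps M K U).
Proof.
move=> HU.
have key C : C \in U -> let q := qsel U ((M :* repr C) * K) in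
   (q *: K) \in U /\ (M :* q) * K = (M :* repr C) * K.
  move=> HC /=. rewrite /qsel. case: pickP => /=; last first.
    move/(_ C); rewrite HC /=. have [x ->] := HU C HC. by rewrite coset_dc.
  move=> C' /andP [HC' sub]. have [y Ey] := HU C' HC'.
  have [Hr Er] := coset_repr K y. rewrite -Ey in Hr Er. rewrite Er; split => //.
  apply: dc_eq. exact: (subsetP sub).
split.
- move=> q /imsetP [C HC ->]. by case: (key C HC).
- move=> C HC. exists (qsel U ((M :* repr C) * K)). split.
    split; first by apply/imsetP; exists C.
    case: (key C HC) => _ ->. have [x Ex] := HU C HC. by rewrite Ex coset_dc.
  move=> q' [/imsetP [C2 HC2 ->] sub].
  case: (key C2 HC2) => _ E2. rewrite E2 in sub.
  have [x Ex] := HU C HC. have [Hr _] := coset_repr K x.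
  have z1 : repr (x *: K) \in (M :* repr C) * K by rewrite Ex; exact: (subsetP (coset_dc M K x)).
  have z2 : repr (x *: K) \in (M :* repr C2) * K by rewrite -Ex; apply: (subsetP sub); rewrite Ex.
  by rewrite (dc_inter z1 z2).
Qed.

Definition ssel K (s : {ffun {set gT} -> {set gT}}) (D : {set gT}) : gT :=
  repr (s (repr D *: K)).
Definition sreps H M K s := [set ssel K s ((M :* repr C) * K) | C in lcosets K H].

Lemma srepsP H M K L s : M \subset H -> K \subset H -> L \subset K ->
  is_section H K L s -> section_reps H M K L s (sreps H M K s).
Proof.
move=> sMH sKH sLK Hs.
have key C : C \in lcosets K H -> let q := ssel K s ((M :* repr C) * K) in
   s (q *: K) = q *: L /\ (M :* q) * K = (M :* repr C) * K.
  move=> HC /=. have [c Hc Ec] := lcosetsP HC.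
  set D := (M :* repr C) * K.
  have HrC : repr C \in D by exact: dc_self.
  have HrD : repr D \in D := mem_repr _ HrC.
  have HrCH : repr C \in H.
    have [Hr _] := coset_repr K c. rewrite Ec. case/lcosetP: Hr => k Hk ->.
    by rewrite groupM // (subsetP sKH).
  have DH : D \subset H.
    apply/subsetP=> z /dcP [m [k [Hm Hk ->]]].
    by rewrite !groupM // ?(subsetP sMH _ Hm) ?(subsetP sKH _ Hk).
  have HdH : repr D \in H := subsetP DH _ HrD.
  have Hd : repr D *: K \in lcosets K H by apply/lcosetsP; exists (repr D).
  have := Hs (repr D *: K). rewrite Hd. case=> /lcosetsP [y Hy Ey] sub.
  rewrite /ssel -/D.
  have [Hr Er] := coset_repr L y. rewrite Ey in sub *.
  have Hq : repr (y *: L) \in repr D *: K := subsetP sub _ Hr.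
  have -> : repr (y *: L) *: K = repr D *: K by apply/lcoset_eqP.
  rewrite Ey Er; split => //.
  apply: dc_eq. case/lcosetP: Hq => k Hk ->. exact: dc_mulr.
split.
- move=> q /imsetP [C HC ->]. by case: (key C HC).
- move=> C HC. exists (ssel K s ((M :* repr C) * K)). split.
    split; first by apply/imsetP; exists C.
    case: (key C HC) => _ ->. have [x _ Ex] := lcosetsP HC. by rewrite Ex coset_dc.
  move=> q' [/imsetP [C2 HC2 ->] sub].
  case: (key C2 HC2) => _ E2. rewrite E2 in sub.
  have [x _ Ex] := lcosetsP HC. have [Hr _] := coset_repr K x.
  have z1 : repr (x *: K) \in (M :* repr C) * K by rewrite Ex; exact: (subsetP (coset_dc M K x)).
  have z2 : repr (x *: K) \in (M :* repr C2) * K by rewrite -Ex; apply: (subsetP sub); rewrite Ex.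
  by rewrite (dc_inter z1 z2).
Qed.

Lemma dc_trans_exists H L K : L \subset H -> K \subset H -> exists R, dc_transversal H L K R.
Proof.
move=> sLH sKH.
exists [set repr ((L :* h) * K) | h in H]. split.
- apply/subsetP=> g /imsetP [h Hh ->].
  have := mem_repr _ (dc_self L K h). case/dcP=> l [k [Hl Hk ->]].
  by rewrite !groupM // ?(subsetP sLH _ Hl) ?(subsetP sKH _ Hk).
- move=> h Hh. exists (repr ((L :* h) * K)). split.
    split; first by apply/imsetP; exists h.
    by rewrite (dc_eq (mem_repr _ (dc_self L K h))) dc_self.
  move=> g [/imsetP [h2 Hh2 ->] Hin].
  rewrite (dc_eq (mem_repr _ (dc_self L K h2))) in Hin.
  by rewrite (dc_inter (dc_self L K h) Hin).
Qed.


Lemma pred_set_eq (T : finType) (U' : {pred T}) (A : {set T}) : (U' = A :> {pred T}) <-> [set x | U' x] = A.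
Proof.
split.
- move=> ->; apply/setP=> x; by rewrite inE.
- move=> <-; apply: functional_extensionality => x. by rewrite -[RHS]/(x \in [set x | U' x]) inE.
Qed.

Lemma lcoset0 (h : gT) : h *: (set0 : {set gT}) = set0.
Proof. by apply/setP=> z; rewrite mem_lcoset !inE. Qed.

Lemma lcosets_act H K (h y : gT) : h \in H -> y \in H -> h *: (y *: K) \in lcosets K H.
Proof. move=> Hh Hy; rewrite -lcosetM; apply/lcosetsP; exists (h * y) => //; exact: groupM. Qed.

Lemma lcosets_actE H K (h : gT) C : h \in H -> (h *: C \in lcosets K H) = (C \in lcosets K H).
Proof.
move=> Hh; apply/idP/idP.
- case/lcosetsP=> y Hy E. have -> : C = h^-1 *: (h *: C) by rewrite -lcosetM mulVg lcoset1.
  rewrite E; apply: lcosets_act => //; by rewrite groupV.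
- case/lcosetsP=> y Hy ->. exact: lcosets_act.
Qed.

Lemma subsets_trans_exists H K : exists RU, subsets_transversal H K RU.
Proof.
have := @orbit_trans _ (@act_sets gT) H (fun U => U \subset lcosets K H).
case.
- by move=> U; rewrite /act_sets (eq_imset _ (@lcoset1 gT)) imset_id.
- move=> a b U _ _; rewrite /act_sets -imset_comp; apply: eq_imset => C /=; exact: lcosetM.
- move=> h U Hh sU; apply/subsetP=> C' /imsetP [C HC ->].
  rewrite lcosets_actE //; exact: (subsetP sU _ HC).
- move=> R [H1 H2]; exists R; split; first by move=> U HU; exact: H1.
  move=> U' HU'.
  have HS : [set x | U' x] \subset lcosets K H.
    apply/subsetP=> x; rewrite inE => Ux; apply: (subsetP HU'); exact: Ux.
  case: (H2 _ HS) => x [[Hx [h Hh E]] Hu]. exists x; split.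
    split => //; exists h => //; exact/pred_set_eq.
  move=> y [Hy [h2 Hh2 E2]]. apply: Hu; split => //; exists h2 => //; exact/pred_set_eq.
Qed.

Definition is_sectionb H K L (s : {ffun {set gT} -> {set gT}}) : bool :=
  [forall C, if C \in lcosets K H then (s C \in lcosets L H) && (s C \subset C) else s C == set0].

Lemma is_sectionP H K L s : is_section H K L s <-> is_sectionb H K L s.
Proof.
split.
- move=> Hs; apply/forallP=> C; have := Hs C; case: ifP => _.
    by case=> -> ->.
  by move=> ->.
- move/forallP=> Hs C; have := Hs C; case: ifP => _.
    by case/andP.
  by move/eqP.
Qed.

Lemma sections_trans_exists H K L : exists RS, sections_transversal H K L RS.
Proof.
have := @orbit_trans _ (@act_sec gT) H (is_sectionb H K L).
case.
- by move=> s; apply/ffunP=> C; rewrite ffunE invg1 !lcoset1.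
- by move=> a b s _ _; apply/ffunP=> C; rewrite !ffunE invMg !lcosetM.
- move=> h s Hh /is_sectionP Hs; apply/is_sectionP => C; rewrite ffunE.
  have := Hs (h^-1 *: C). rewrite lcosets_actE ?groupV //. case: ifP => HC.
    case=> /lcosetsP [z Hz ->] sub. split; first exact: lcosets_act.
    apply: (subset_trans (_ : _ \subset h *: (h^-1 *: C))); first by rewrite lcosetS.
    by rewrite -lcosetM mulgV lcoset1.
  by move=> ->; rewrite lcoset0.
- move=> R [H1 H2]; exists R; split.
    by move=> s /H1 /is_sectionP.
  by move=> s' /is_sectionP /H2.
Qed.


Lemma act_sec1 (s : {ffun {set gT} -> {set gT}}) : act_sec 1 s = s.
Proof. by apply/ffunP=> C; rewrite ffunE invg1 !lcoset1. Qed.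

Lemma act_secM a b (s : {ffun {set gT} -> {set gT}}) : act_sec (a * b) s = act_sec a (act_sec b s).
Proof. by apply/ffunP=> C; rewrite !ffunE invMg !lcosetM. Qed.

Lemma stabF_act H s m : m \in stabF H s -> act_sec m s = s.
Proof.
have gs : group_set [set h in H | act_sec h s == s].
  apply/group_setP; split; first by rewrite inE group1 act_sec1 eqxx.
  move=> x y; rewrite !inE => /andP [Hx /eqP Ex] /andP [Hy /eqP Ey].
  by rewrite groupM // act_secM Ey Ex eqxx.
by rewrite /stabF /genG /= gen_set_id // inE => /andP [_ /eqP].
Qed.

Lemma stabF_fix H (K L0 : {group gT}) (s : {ffun {set gT} -> {set gT}}) q m : s (q *: K) = q *: L0 ->
  m \in stabF H s -> m \in K :^ q^-1 -> m \in L0 :^ q^-1.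
Proof.
move=> Es Hm.
rewrite !mem_conjg invgK !conjgE => mK.
have E1 : (m * q) *: K = q *: K by apply/lcoset_eqP; rewrite mem_lcoset.
have := stabF_act Hm. move/ffunP/(_ ((m * q) *: K)). rewrite ffunE -lcosetM mulKg E1.
rewrite Es -lcosetM => /lcoset_eqP. by rewrite mem_lcoset.
Qed.

End GroupPart.

Set Implicit Arguments. Unset Strict Implicit. Unset Printing Implicit Defensive.
Import GRing.Theory.
Local Open Scope ring_scope.

Section Ax.
Variables (gT : finGroupType) (G : {group gT}) (X : tambara G).
Local Notation res H K := (@tres _ X H K).
Local Notation tr H K := (@ttr _ X H K).
Local Notation nm H K := (@tnm _ X H K).
Local Notation cj g H K := (@tcj _ X g H K).

Lemma addhom0 (R1 R2 : comPzRingType) (f : R1 -> R2) : addhom f -> f 0 = 0.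
Proof. move=> h; have := h 0 0; rewrite addr0 => E; apply: (addrI (f 0)); by rewrite -E addr0. Qed.


Section Lev.
Variables H K : {group gT}.
Hypotheses (sHG : (H \subset G)%g) (sKH : (K \subset H)%g).
Lemma resD x y : res H K (x + y) = res H K x + res H K y.
Proof. by case: (taxioms X) => a _; case: (a H K sHG sKH). Qed.
Lemma resM x y : res H K (x * y) = res H K x * res H K y.
Proof. by case: (taxioms X) => a _; case: (a H K sHG sKH) => _ []. Qed.
Lemma res0 : res H K 0 = 0.
Proof. apply: addhom0; exact: resD. Qed.
Lemma trD x y : tr H K (x + y) = tr H K x + tr H K y.
Proof. by case: (taxioms X) => _ [a _]; apply: a. Qed.
Lemma tr0 : tr H K 0 = 0.
Proof. apply: addhom0; exact: trD. Qed.
Lemma nmM x y : nm H K (x * y) = nm H K x * nm H K y.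
Proof. by case: (taxioms X) => _ [_ [a _]]; case: (a H K sHG sKH). Qed.
Lemma nm0 : nm H K 0 = 0.
Proof. by case: (taxioms X) => _ [_ [a _]]; case: (a H K sHG sKH) => _ []. Qed.
Lemma frob x y : tr H K x * y = tr H K (x * res H K y).
Proof. by case: (taxioms X) => _ [_ [_ [_ [_ [_ [_ [_ [_ [a _]]]]]]]]]; apply: a. Qed.
End Lev.

Lemma res_id (H : {group gT}) x : (H \subset G)%g -> res H H x = x.
Proof. by move=> sHG; case: (taxioms X) => _ [_ [_ [_ [a _]]]]; case: (a H sHG x). Qed.
Lemma tr_id (H : {group gT}) x : (H \subset G)%g -> tr H H x = x.
Proof. by move=> sHG; case: (taxioms X) => _ [_ [_ [_ [a _]]]]; case: (a H sHG x) => _ []. Qed.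

Lemma tr_trans (H K L : {group gT}) y : (H \subset G)%g -> (K \subset H)%g -> (L \subset K)%g ->
  tr H K (tr K L y) = tr H L y.
Proof. by move=> ? ? ?; case: (taxioms X) => _ [_ [_ [_ [_ [a _]]]]]; case: (a H K L) => // _ []. Qed.

Section Cj.
Variables (g : gT) (H K : {group gT}).
Hypotheses (Hg : g \in G) (sHG : (H \subset G)%g) (EK : gval K = (H :^ g)%g).
Lemma cjD x y : cj g H K (x + y) = cj g H K x + cj g H K y.
Proof. by case: (taxioms X) => _ [_ [_ [a _]]]; case: (a g H K Hg sHG EK). Qed.
Lemma cjM x y : cj g H K (x * y) = cj g H K x * cj g H K y.
Proof. by case: (taxioms X) => _ [_ [_ [a _]]]; case: (a g H K Hg sHG EK) => _ []. Qed.
Lemma cj0 : cj g H K 0 = 0.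
Proof. apply: addhom0; exact: cjD. Qed.
End Cj.

Lemma cj_inner h (H : {group gT}) x : (H \subset G)%g -> h \in H -> cj h H H x = x.
Proof. by move=> ? ?; case: (taxioms X) => _ [_ [_ [_ [_ [_ [a _]]]]]]; apply: a. Qed.

Section CjC.
Variables (g : gT) (H K H' K' : {group gT}).
Hypotheses (Hg : g \in G) (sHG : (H \subset G)%g) (sKH : (K \subset H)%g)
  (EH : gval H' = (H :^ g)%g) (EK : gval K' = (K :^ g)%g).
Lemma cj_res x : cj g K K' (res H K x) = res H' K' (cj g H H' x).
Proof. by case: (taxioms X) => _ [_ [_ [_ [_ [_ [_ [_ [a _]]]]]]]]; case: (a g H K H' K'). Qed.
Lemma cj_tr y : cj g H H' (tr H K y) = tr H' K' (cj g K K' y).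
Proof. by case: (taxioms X) => _ [_ [_ [_ [_ [_ [_ [_ [a _]]]]]]]]; case: (a g H K H' K') => // _ []. Qed.
Lemma cj_nm y : cj g H H' (nm H K y) = nm H' K' (cj g K K' y).
Proof. by case: (taxioms X) => _ [_ [_ [_ [_ [_ [_ [_ [a _]]]]]]]]; case: (a g H K H' K') => // _ []. Qed.
End CjC.

Lemma dcf (H K L : {group gT}) R : (H \subset G)%g -> (K \subset H)%g -> (L \subset H)%g -> dc_transversal H L K R ->
  forall x, res H L (tr H K x) =
       \sum_(g in R) tr L (capG L (cjG K g^-1%g))
          (cj g^-1%g (capG K (cjG L g)) (capG L (cjG K g^-1%g))
             (res K (capG K (cjG L g)) x)).
Proof.
move=> ? ? ? ?; case: (taxioms X) => _ [_ [_ [_ [_ [_ [_ [_ [_ [_ [a _]]]]]]]]]].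
by case: (a H K L R).
Qed.

Lemma recip_sum (H K : {group gT}) RU (Qa Qb : {set {set gT}} -> {set gT}) :
     (H \subset G)%g -> (K \subset H)%g -> subsets_transversal H K RU ->
     (forall U, U \in RU -> orbit_reps (stabS H U) K U (Qa U) /\
                           orbit_reps (stabS H U) K (lcosets K H :\: U) (Qb U)) ->
     forall a b : tR X K,
     nm H K (a + b) =
       \sum_(U in RU) tr H (stabS H U)
          ((\prod_(q in Qa U) @nfac _ X (stabS H U) K K q a) *
           (\prod_(q in Qb U) @nfac _ X (stabS H U) K K q b)).
Proof.
move=> ? ? ? ?; case: (taxioms X) => _ [_ [_ [_ [_ [_ [_ [_ [_ [_ [_ [a _]]]]]]]]]]].
exact: a.
Qed.

Lemma recip_tr (H K L : {group gT}) RS (Q : {ffun {set gT} -> {set gT}} -> {set gT}) :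
     (H \subset G)%g -> (K \subset H)%g -> (L \subset K)%g -> sections_transversal H K L RS ->
     (forall s, s \in RS -> section_reps H (stabF H s) K L s (Q s)) ->
     forall a : tR X L,
     nm H K (tr K L a) =
       \sum_(s in RS) tr H (stabF H s)
          (\prod_(q in Q s) @nfac _ X (stabF H s) K L q a).
Proof.
move=> ? ? ? ?; case: (taxioms X) => _ [_ [_ [_ [_ [_ [_ [_ [_ [_ [_ [_ a]]]]]]]]]]].
exact: a.
Qed.

End Ax.

Set Implicit Arguments. Unset Strict Implicit. Unset Printing Implicit Defensive.
Import GRing.Theory.
Local Open Scope ring_scope.

Section IdealAx.
Variables (gT : finGroupType) (G : {group gT}) (X : tambara_data gT) (I : tfamily X).
Hypothesis HI : tideal G I.
Lemma I0 (H : {group gT}) : (H \subset G)%g -> @I H 0.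
Proof. by case: HI => a _; apply: a. Qed.
Lemma ID (H : {group gT}) x y : (H \subset G)%g -> @I H x -> @I H y -> @I H (x + y).
Proof. by case: HI => _ [a _]; apply: a. Qed.
Lemma IM (H : {group gT}) r x : (H \subset G)%g -> @I H x -> @I H (r * x).
Proof. by case: HI => _ [_ [a _]]; apply: a. Qed.
Lemma Ires (H K : {group gT}) x : (H \subset G)%g -> (K \subset H)%g -> @I H x -> @I K (@tres _ X H K x).
Proof. by case: HI => _ [_ [_ [a _]]] ? ?; apply: a. Qed.
Lemma Itr (H K : {group gT}) x : (H \subset G)%g -> (K \subset H)%g -> @I K x -> @I H (@ttr _ X H K x).
Proof. by case: HI => _ [_ [_ [_ [a _]]]] ? ?; apply: a. Qed.
Lemma Inm (H K : {group gT}) x : (H \subset G)%g -> (K \subset H)%g -> @I K x -> @I H (@tnm _ X H K x).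
Proof. by case: HI => _ [_ [_ [_ [_ [a _]]]]] ? ?; apply: a. Qed.
Lemma Icj g (H K : {group gT}) x : g \in G -> (H \subset G)%g -> gval K = (H :^ g)%g -> @I H x -> @I K (@tcj _ X g H K x).
Proof. by case: HI => _ [_ [_ [_ [_ [_ a]]]]] ? ? ?; apply: a. Qed.
End IdealAx.

Section Inter.
Variables (gT : finGroupType) (G : {group gT}) (X : tambara_data gT) (Phi : tfamily X -> Prop).
Lemma inter_ideal : tideal G (fun H y => forall I : tfamily X, tideal G I -> Phi I -> I H y).
Proof.
split; first by move=> H sHG I HI _; exact: (I0 HI sHG).
split; first by move=> H x y sHG Hx Hy I HI PI; exact: (ID HI sHG (Hx I HI PI) (Hy I HI PI)).
split; first by move=> H r x sHG Hx I HI PI; exact: (IM HI r sHG (Hx I HI PI)).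
split; first by move=> H K sHG sKH x Hx I HI PI; exact: (Ires HI sHG sKH (Hx I HI PI)).
split; first by move=> H K sHG sKH x Hx I HI PI; exact: (Itr HI sHG sKH (Hx I HI PI)).
split; first by move=> H K sHG sKH x Hx I HI PI; exact: (Inm HI sHG sKH (Hx I HI PI)).
by move=> g H K Hg sHG EK x Hx I HI PI; exact: (Icj HI Hg sHG EK (Hx I HI PI)).
Qed.
End Inter.

Section Morph.
Variables (gT : finGroupType) (G : {group gT}) (T S : tambara_data gT)
  (phi : forall H : {group gT}, tR T H -> tR S H).
Arguments phi : clear implicits.
Hypothesis Hphi : tmorphism G phi.
Lemma phiD (H : {group gT}) x y : (H \subset G)%g -> phi H (x + y) = phi H x + phi H y.
Proof. by case: Hphi => a _ sHG; case: (a H sHG). Qed.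
Lemma phiM (H : {group gT}) x y : (H \subset G)%g -> phi H (x * y) = phi H x * phi H y.
Proof. by case: Hphi => a _ sHG; case: (a H sHG) => _ []. Qed.
Lemma phi0 (H : {group gT}) : (H \subset G)%g -> phi H 0 = 0.
Proof. move=> sHG; apply: addhom0 => x y; exact: phiD. Qed.
Lemma phi_res (H K : {group gT}) x : (H \subset G)%g -> (K \subset H)%g ->
  phi K (@tres _ T H K x) = @tres _ S H K (phi H x).
Proof. by case: Hphi => _ [a _] ? ?; apply: a. Qed.
Lemma phi_tr (H K : {group gT}) x : (H \subset G)%g -> (K \subset H)%g ->
  phi H (@ttr _ T H K x) = @ttr _ S H K (phi K x).
Proof. by case: Hphi => _ [_ [a _]] ? ?; apply: a. Qed.
Lemma phi_nm (H K : {group gT}) x : (H \subset G)%g -> (K \subset H)%g ->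
  phi H (@tnm _ T H K x) = @tnm _ S H K (phi K x).
Proof. by case: Hphi => _ [_ [_ [a _]]] ? ?; apply: a. Qed.
Lemma phi_cj g (H K : {group gT}) x : g \in G -> (H \subset G)%g -> gval K = (H :^ g)%g ->
  phi K (@tcj _ T g H K x) = @tcj _ S g H K (phi H x).
Proof. by case: Hphi => _ [_ [_ [_ a]]] ? ? ?; apply: a. Qed.
End Morph.

Set Implicit Arguments. Unset Strict Implicit. Unset Printing Implicit Defensive.
Import GRing.Theory.
Local Open Scope ring_scope.

Section Main.
Variables (gT : finGroupType) (G : {group gT}) (T S : tambara G)
  (phi : forall H : {group gT}, tR T H -> tR S H).
Arguments phi : clear implicits.
Hypothesis Hphi : tmorphism G phi.
Variable A : tfamily T.
Arguments A : clear implicits.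
Hypothesis HA : tideal G A.
Implicit Types L K H : {group gT}.

Local Notation res H K := (@tres _ S H K).
Local Notation tr H K := (@ttr _ S H K).
Local Notation nm H K := (@tnm _ S H K).
Local Notation cj g H K := (@tcj _ S g H K).
Local Notation resT H K := (@tres _ T H K).
Local Notation trT H K := (@ttr _ T H K).
Local Notation nmT H K := (@tnm _ T H K).
Local Notation cjT g H K := (@tcj _ T g H K).

Local Unset Implicit Arguments.
Inductive Dind : forall L : {group gT}, tR S L -> Prop :=
| D0 L : Dind L 0
| DD L u w : Dind L u -> Dind L w -> Dind L (u + w)
| Dg (L K : {group gT}) s a : (K \subset L)%g -> (L \subset G)%g -> A K a ->
     Dind L (tr L K (s * phi K a)).
Local Set Implicit Arguments.

Lemma Dunit (L : {group gT}) s a : (L \subset G)%g -> A L a -> Dind L (s * phi L a).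
Proof. move=> sLG Ha. have := @Dg L L s a (subxx _) sLG Ha. by rewrite tr_id. Qed.

Lemma Dmul L v : Dind L v -> forall r, Dind L (r * v).
Proof.
elim=> {L v} [L|L u w _ IHu _ IHw|L K s a sKL sLG Ha] r.
- rewrite mulr0; exact: D0.
- rewrite mulrDr; apply: DD; [exact: IHu | exact: IHw].
- rewrite mulrC frob // -mulrA (mulrC (phi K a)) mulrA. exact: Dg.
Qed.

Lemma Dtr K v : Dind K v -> forall L, (K \subset L)%g -> (L \subset G)%g -> Dind L (tr L K v).
Proof.
elim=> {K v} [K|K u w _ IHu _ IHw|K K0 s a sK0K sKG Ha] L sKL sLG.
- rewrite tr0 //; exact: D0.
- rewrite trD //; apply: DD; [exact: IHu | exact: IHw].
- rewrite tr_trans //. apply: Dg => //. exact: subset_trans sKL.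
Qed.

Lemma conj_subG (H : {group gT}) g : g \in G -> (H \subset G)%g -> (H :^ g \subset G)%g.
Proof. by move=> Hg sHG; rewrite -(conjGid Hg) conjSg. Qed.

Lemma Dcj H v : Dind H v -> forall g (K : {group gT}), g \in G -> (H \subset G)%g ->
  gval K = (H :^ g)%g -> Dind K (cj g H K v).
Proof.
elim=> {H v} [H|H u w _ IHu _ IHw|H K0 s a sK0H sHG Ha] g K Hg sHG' EK.
- rewrite cj0 //; exact: D0.
- rewrite cjD //; apply: DD; [exact: IHu | exact: IHw].
- have sK0G : (K0 \subset G)%g := subset_trans sK0H sHG.
  rewrite (@cj_tr _ _ S g H K0 K (cjG K0 g)) //.
  rewrite cjM // -(phi_cj Hphi) //. apply: Dg.
  + by rewrite EK conjSg.
  + by rewrite EK conj_subG.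
  + by apply: (Icj HA).
Qed.

Lemma Dres L v : Dind L v -> (L \subset G)%g -> forall L' : {group gT}, (L' \subset L)%g -> Dind L' (res L L' v).
Proof.
elim=> {L v} [L|L u w _ IHu _ IHw|L K s a sKL sLG Ha] sLG' L' sL'L.
- rewrite res0 //; exact: D0.
- rewrite resD //; apply: DD; [exact: IHu | exact: IHw].
- have [R HR] := dc_trans_exists sL'L sKL.
  have sKG : (K \subset G)%g := subset_trans sKL sLG.
  have sL'G : (L' \subset G)%g := subset_trans sL'L sLG.
  rewrite (dcf (X:=S) sLG sKL sL'L HR).
  apply: big_ind => [|x y|g Hg]; [exact: D0 | exact: DD |].
  have gL : g \in L by case: HR => /subsetP sRL _; apply: sRL.
  have gG : g \in G := subsetP sLG _ gL.
  have giG : g^-1%g \in G by rewrite groupV.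
  have sYK : (capG K (cjG L' g) \subset K)%g by exact: subsetIl.
  have sYG : (capG K (cjG L' g) \subset G)%g := subset_trans sYK sKG.
  have EZ : gval (capG L' (cjG K g^-1)) = (capG K (cjG L' g) :^ g^-1)%g.
    by rewrite /= conjIg conjsgK setIC.
  rewrite resM // -(phi_res Hphi) // cjM // -(phi_cj Hphi) //.
  apply: Dg => //.
  + exact: subsetIl.
  + apply: (Icj HA) => //. exact: (Ires HA).
Qed.


Lemma nfac_inner (X : tambara G) H K q u : (H \subset G)%g -> (K \subset H)%g -> q \in H ->
  @nfac _ X H K K q u = @tnm _ X H K u.
Proof.
move=> sHG sKH qH.
have qiH : (q^-1 \in H)%g by rewrite groupV.
have qiG : (q^-1 \in G)%g := subsetP sHG _ qiH.
have sXH : (cjG K q^-1 \subset H)%g by rewrite /= -(conjGid qiH) conjSg.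
have E : capG H (cjG K q^-1) = cjG K q^-1.
  apply: val_inj => /=. exact/setIidPr.
rewrite /nfac E res_id; last exact: subset_trans sXH sHG.
have EH : gval H = (H :^ q^-1)%g by rewrite conjGid.
rewrite -(@cj_nm _ _ X q^-1 H K H (cjG K q^-1)) //.
exact: cj_inner.
Qed.

Lemma prod_D L (Q : {set gT}) (F : gT -> tR S L) q0 : q0 \in Q -> Dind L (F q0) ->
  Dind L (\prod_(q in Q) F q).
Proof. move=> Hq0 HF; rewrite (bigD1 q0) //= mulrC; exact: Dmul. Qed.

Lemma prod2 L (x y : tR S L) : Dind L x \/ Dind L y -> Dind L (x * y).
Proof. case=> H; [rewrite mulrC|]; exact: Dmul. Qed.

Lemma K_lcosets H K : (K \subset H)%g -> (gval K \in lcosets K H).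
Proof. move=> _; apply/lcosetsP; exists 1%g; by rewrite ?group1 ?lcoset1. Qed.

Lemma stabS_sub H U : (stabS H U \subset H)%g.
Proof. by rewrite /stabS /genG /= gen_subG; apply/subsetP=> x; rewrite inE => /andP []. Qed.

Lemma stabF_sub H sg : (stabF H sg \subset H)%g.
Proof. by rewrite /stabF /genG /= gen_subG; apply/subsetP=> x; rewrite inE => /andP []. Qed.

Lemma Dnorm n : forall H, (#|H| <= n)%N -> (H \subset G)%g -> forall K v, Dind K v ->
  (K \subset H)%g -> Dind H (nm H K v).
Proof.
elim: n => [|n IHn] H; first by rewrite leqNgt cardG_gt0.
move=> cardH sHG K v Hv; elim: Hv => {K v} [K|K u w Hu IHu Hw IHw|K L0 s a sL0K sKG Ha] sKH.
- rewrite nm0 //; exact: D0.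
- have sKG := subset_trans sKH sHG.
  have [RU HRU] := subsets_trans_exists H K.
  pose Qa U := oreps (stabS H U) K U.
  pose Qb U := oreps (stabS H U) K (lcosets K H :\: U).
  have HQ : forall U, U \in RU -> orbit_reps (stabS H U) K U (Qa U) /\
                           orbit_reps (stabS H U) K (lcosets K H :\: U) (Qb U).
    move=> U HU; have sU := (proj1 HRU U HU); split; apply: orepsP => C.
      move=> HC; have /lcosetsP [x _ ->] := subsetP sU C HC; by exists x.
    rewrite inE => /andP [_ HC]; have /lcosetsP [x _ ->] := HC; by exists x.
  rewrite (recip_sum sHG sKH HRU HQ).
  apply: big_ind => [|x y|U HU]; [exact: D0 | exact: DD |].
  have [HQa HQb] := HQ U HU.
  have sMH := stabS_sub H U.
  have sMG := subset_trans sMH sHG.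
  have QaH q : q \in Qa U -> q \in H.
    move=> Hq; apply: (lcosets_mem sKH). exact: (subsetP (proj1 HRU U HU)) (proj1 HQa q Hq).
  have QbH q : q \in Qb U -> q \in H.
    move=> Hq; apply: (lcosets_mem sKH). have := proj1 HQb q Hq. by rewrite inE => /andP [].
  have Hne : (exists2 q0, q0 \in Qa U & true) \/ (exists2 q0, q0 \in Qb U & true).
    case: (boolP (gval K \in U)) => KU.
      left; case: (proj2 HQa _ KU) => q0 [[Hq0 _] _]; by exists q0.
    right; have KC : gval K \in lcosets K H :\: U by rewrite inE KU K_lcosets.
    case: (proj2 HQb _ KC) => q0 [[Hq0 _] _]; by exists q0.
  have [EM|NEM] := eqVneq (stabS H U) H.
  + rewrite EM tr_id //. apply: prod2.
    case: Hne => [[q0 Hq0 _]|[q0 Hq0 _]]; [left|right]; apply: (prod_D Hq0).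
      by rewrite nfac_inner //; [exact: IHu | exact: QaH].
    by rewrite nfac_inner //; [exact: IHw | exact: QbH].
  + have pMH : (stabS H U \proper H)%g by rewrite properEneq sMH andbT.
    have cardM : (#|stabS H U| <= n)%N.
      by rewrite -ltnS; apply: leq_trans cardH; exact: proper_card.
    apply: Dtr => //. apply: prod2.
    have key (y : tR S K) q : Dind K y -> q \in H -> Dind (stabS H U) (@nfac _ S (stabS H U) K K q y).
      move=> Hy qH. have qiG : (q^-1 \in G)%g by rewrite groupV (subsetP sHG).
      rewrite /nfac. apply: IHn => //; last exact: subsetIl.
      apply: Dres; last exact: subsetIr.
      * apply: Dcj => //.
      * exact: conj_subG.
    case: Hne => [[q0 Hq0 _]|[q0 Hq0 _]]; [left|right]; apply: (prod_D Hq0); apply: key => //;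
      [exact: QaH | exact: QbH].
- have [RS HRS] := sections_trans_exists H K L0.
  pose Q sg := sreps H (stabF H sg) K sg.
  have HQ : forall sg, sg \in RS -> section_reps H (stabF H sg) K L0 sg (Q sg).
    move=> sg Hsg; apply: srepsP => //; [exact: stabF_sub | exact: (proj1 HRS)].
  rewrite (recip_tr sHG sKH sL0K HRS HQ).
  apply: big_ind => [|x y|sg Hsg]; [exact: D0 | exact: DD |].
  have [HQ1 HQ2] := HQ sg Hsg.
  have sMH := stabF_sub H sg.
  have sMG := subset_trans sMH sHG.
  have sL0G := subset_trans sL0K sKG.
  apply: Dtr => //.
  case: (HQ2 _ (K_lcosets sKH)) => q0 [[Hq0 _] _].
  apply: (prod_D Hq0).
  have qH : q0 \in H.
    apply: (lcosets_mem sKH). have := proj1 HRS sg Hsg (q0 *: K)%g.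
    case: ifP => // _ E. have := HQ1 q0 Hq0. rewrite E => E2.
    have : q0 \in (q0 *: L0)%g by apply/lcosetP; exists 1%g; rewrite ?group1 ?mulg1.
    by rewrite -E2 inE.
  have qiG : (q0^-1 \in G)%g by rewrite groupV (subsetP sHG).
  have sXG : (cjG L0 q0^-1 \subset G)%g by exact: conj_subG.
  have sZX : (capG (stabF H sg) (cjG K q0^-1) \subset cjG L0 q0^-1)%g.
    apply/subsetP=> m; rewrite inE => /andP [Hm1 Hm2]; exact: (stabF_fix (HQ1 q0 Hq0) Hm1 Hm2).
  have sZM : (capG (stabF H sg) (cjG K q0^-1) \subset stabF H sg)%g by exact: subsetIl.
  rewrite /nfac cjM // -(phi_cj Hphi) // resM // -(phi_res Hphi) // nmM // -(phi_nm Hphi) //.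
  apply: Dunit => //.
  apply: (Inm HA) => //; apply: (Ires HA) => //; apply: (Icj HA) => //.
Qed.

End Main.


Arguments Dind {gT G T S} phi A L _.

Section Main2.
Variables (gT : finGroupType) (G : {group gT}) (T S : tambara G)
  (phi : forall H : {group gT}, tR T H -> tR S H).
Arguments phi : clear implicits.
Hypothesis Hphi : tmorphism G phi.
Variable A : tfamily T.
Arguments A : clear implicits.
Hypothesis HA : tideal G A.

Lemma D_ideal : tideal G (Dind phi A).
Proof.
split; first by move=> H _; exact: D0.
split; first by move=> H x y _; exact: DD.
split; first by move=> H r x _ Hx; exact: Dmul.
split; first by move=> H K sHG sKH x Hx; exact: (Dres Hphi HA).
split; first by move=> H K sHG sKH x Hx; exact: Dtr.
split; first by move=> H K sHG sKH x Hx; exact: (Dnorm Hphi HA (leqnn #|H|)).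
by move=> g H K Hg sHG EK x Hx; exact: (Dcj Hphi HA).
Qed.

Lemma D_gen (K : {group gT}) a : (K \subset G)%g -> A K a -> Dind phi A K (phi K a).
Proof. move=> sKG Ha; rewrite -[phi K a]mul1r; exact: Dunit. Qed.
End Main2.

Unset Implicit Arguments.
Unset Printing Implicit Defensive.
Import GRing.Theory.
Local Open Scope ring_scope.

Section Final.
Variables (gT : finGroupType) (G : {group gT}) (T S : tambara G)
  (phi : forall H : {group gT}, tR T H -> tR S H).
Arguments phi : clear implicits.
Hypothesis Hphi : tmorphism G phi.

Definition push (F : tfamily T) : tfamily S := fun L y =>
  forall I : tfamily S, tideal G I ->
    (forall K : {group gT}, (K \subset G)%g -> forall a, F K a -> I K (phi K a)) -> I L y.

Lemma push_ideal F : tideal G (push F).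
Proof. exact: (inter_ideal G (fun I : tfamily S => forall K : {group gT}, (K \subset G)%g -> forall a, F K a -> I K (phi K a))). Qed.

Lemma push_in (F : tfamily T) (K : {group gT}) a : (K \subset G)%g -> F K a -> push F K (phi K a).
Proof. by move=> sKG Ha I HI HF; apply: HF. Qed.

Lemma push_D (A : tfamily T) : tideal G A -> forall (L : {group gT}) y, (L \subset G)%g ->
  push A L y -> Dind phi A L y.
Proof.
move=> HA L y _ Hy; apply: Hy; first exact: (D_ideal Hphi HA).
move=> K sKG a Ha; exact: D_gen.
Qed.

Lemma tprod_ideal (X : tambara_data gT) (A B : tfamily X) : tideal G (tprod G A B).
Proof. exact: (inter_ideal G (fun I : tfamily X => forall (H' : {group gT}) a b, (H' \subset G)%g -> A H' a -> B H' b -> I H' (a * b))). Qed.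

Lemma tgen_ideal (X : tambara_data gT) (H0 : {group gT}) (x : tR X H0) : tideal G (tgen G x).
Proof. exact: (inter_ideal G (fun I : tfamily X => I H0 x)). Qed.

Lemma tpow_ideal (X : tambara_data gT) (A : tfamily X) n : tideal G A -> tideal G (tpow G A n).
Proof. case: n => [|n] //= _; exact: tprod_ideal. Qed.

Lemma Dprod (A B : tfamily T) : tideal G A -> tideal G B ->
  forall (L : {group gT}) p, Dind phi A L p -> (L \subset G)%g ->
  forall q, Dind phi B L q -> push (tprod G A B) L (p * q).
Proof.
move=> HA HB.
have HP := push_ideal (tprod G A B).
have inner : forall (K : {group gT}) q', Dind phi B K q' -> (K \subset G)%g ->
    forall s a, A K a -> push (tprod G A B) K ((s * phi K a) * q').
  move=> K q'; elim=> {K q'} [K|K u w _ IHu _ IHw|K K2 s2 b sK2K sKG Hb] sKG' s a Ha.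
  - rewrite mulr0; exact: (I0 HP).
  - rewrite mulrDr; exact: (ID HP sKG' (IHu sKG' s a Ha) (IHw sKG' s a Ha)).
  - have sK2G := subset_trans sK2K sKG.
    rewrite mulrC frob // resM // -(phi_res Hphi) // mulrACA (mulrC (phi K2 b)) -(phiM Hphi) //.
    apply: (Itr HP) => //. apply: (IM HP) => //. apply: push_in => //.
    move=> I HI HAB; apply: HAB => //. exact: (Ires HA).
move=> L p; elim=> {L p} [L|L u w _ IHu _ IHw|L K s a sKL sLG Ha] sLG' q Hq.
- rewrite mul0r; exact: (I0 HP).
- rewrite mulrDl; exact: (ID HP sLG' (IHu sLG' q Hq) (IHw sLG' q Hq)).
- have sKG := subset_trans sKL sLG.
  rewrite frob //. apply: (Itr HP) => //. apply: inner => //.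
  exact: (Dres Hphi HB Hq).
Qed.

Lemma tprod_push (A B : tfamily T) : tideal G A -> tideal G B ->
  tsubfam G (tprod G (push A) (push B)) (push (tprod G A B)).
Proof.
move=> HA HB L sLG y Hy. apply: (Hy (push (tprod G A B))); first exact: push_ideal.
move=> H' p q sH'G Hp Hq. apply: Dprod => //; exact: push_D.
Qed.

Lemma tprod_mono (X : tambara_data gT) (A A' B B' : tfamily X) :
  tsubfam G A A' -> tsubfam G B B' -> tsubfam G (tprod G A B) (tprod G A' B').
Proof.
move=> sA sB L sLG y Hy I HI HAB. apply: Hy => // H' a b sH'G Ha Hb.
apply: HAB => //; [exact: sA | exact: sB].
Qed.

Lemma subfam_trans (X : tambara_data gT) (A B C : tfamily X) :
  tsubfam G A B -> tsubfam G B C -> tsubfam G A C.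
Proof. move=> sAB sBC L sLG y Hy; apply: sBC => //; exact: sAB. Qed.

Lemma chain (H0 : {group gT}) (x : tR T H0) n : (H0 \subset G)%g ->
  tsubfam G (tpow G (tgen G (phi H0 x)) n) (push (tpow G (tgen G x) n)).
Proof.
move=> sH0G.
have base : tsubfam G (tgen G (phi H0 x)) (push (tgen G x)).
  move=> L sLG y Hy. apply: (Hy (push (tgen G x))); first exact: push_ideal.
  by apply: push_in.
elim: n => [|n IHn] //=.
eapply subfam_trans; first (eapply tprod_mono; [exact IHn | exact base]).
apply: tprod_push; [exact: tpow_ideal (tgen_ideal _ _ _) | exact: tgen_ideal].
Qed.

End Final.

Theorem lemma6p9 (gT : finGroupType) (G : {group gT}) (T S : tambara G)
    (phi : forall H : {group gT}, tR T H -> tR S H)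
    (J : tfamily S) :
  tmorphism G phi -> tideal G J -> tradical G J ->
  tideal G (tpreim phi J) /\ tradical G (tpreim phi J).
Proof.
move=> Hphi HJ HJr.
have HP : tideal G (tpreim phi J).
  split; first by move=> H sHG; rewrite /tpreim (phi0 Hphi) //; exact: (I0 HJ).
  split; first by move=> H x y sHG Hx Hy; rewrite /tpreim (phiD Hphi) //; exact: (ID HJ).
  split; first by move=> H r x sHG Hx; rewrite /tpreim (phiM Hphi) //; exact: (IM HJ).
  split; first by move=> H K sHG sKH x Hx; rewrite /tpreim (phi_res Hphi) //; exact: (Ires HJ).
  split; first by move=> H K sHG sKH x Hx; rewrite /tpreim (phi_tr Hphi) //; exact: (Itr HJ).
  split; first by move=> H K sHG sKH x Hx; rewrite /tpreim (phi_nm Hphi) //; exact: (Inm HJ).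
  by move=> g H K Hg sHG EK x Hx; rewrite /tpreim (phi_cj Hphi) //; exact: (Icj HJ).
split => // H sHG x; split.
- move=> Hx; exists 0%N. move=> L sLG y Hy. exact: Hy.
- case=> n Hn. apply/(HJr H sHG (phi H x)). exists n.
  eapply subfam_trans; first exact: (chain gT G T S phi Hphi H x n sHG).
  by move=> L sLG y Hy; apply: Hy.
Qed.
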